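(* Let $G$ be a profinite group, $A,B$ closed subgroups of $G$ with $B$ properly contained in $A$, and let $\{H_\alpha\}_{\alpha\le\mu}$ be an accessible series from $G$ to a closed subgroup $H=H_\mu$. Suppose $AH\neq BH$. Then there exists $\alpha<\mu$ such that $(A\cap H_\alpha)H_{\alpha+1}\neq (B\cap H_\alpha)H_{\alpha+1}$.
   Context: An accessible series from a profinite group $G$ to a closed subgroup $H$ over an ordinal $\mu$ is a family of closed subgroups $G=H_0\ge\cdots\ge H_\lambda\ge\cdots\ge H_\mu=H$ with $H_{\alpha+1}\trianglelefteq H_\alpha$ for all $\alpha<\mu$ and $H_\alpha=\bigcap_{\beta<\alpha}H_\beta$ for all limit ordinals $\alpha\le\mu$. *)

(* Defs.v *)
From HB Require Import structures.
From mathcomp Require Import all_boot all_order.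
From mathcomp Require Import all_classical all_reals all_analysis.
Set Implicit Arguments. Unset Strict Implicit. Unset Printing Implicit Defensive.
Import Order.TTheory.
Local Open Scope classical_set_scope.

Definition group_axioms (G : Type) (mul : G -> G -> G) (inv : G -> G) (one : G) :=
  [/\ forall x y z, mul x (mul y z) = mul (mul x y) z,
      forall x, mul one x = x,
      forall x, mul x one = x,
      forall x, mul (inv x) x = one &
      forall x, mul x (inv x) = one].

Definition topological_group (G : topologicalType) (mul : G -> G -> G)
    (inv : G -> G) (one : G) :=
  [/\ group_axioms mul inv one,
      continuous (fun p : G * G => mul p.1 p.2) &
      continuous inv].

Definition profinite_group (G : topologicalType) (mul : G -> G -> G)
    (inv : G -> G) (one : G) :=
  [/\ topological_group mul inv one,
      compact [set: G],
      hausdorff_space G &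
      totally_disconnected [set: G]].

Section Subgroups.
Context (G : Type) (mul : G -> G -> G) (inv : G -> G) (one : G).

Definition is_subgroup (S : set G) :=
  [/\ S one, forall x y, S x -> S y -> S (mul x y) & forall x, S x -> S (inv x)].

Definition normal_sub (N K : set G) :=
  [/\ is_subgroup N, N `<=` K &
      forall k n, K k -> N n -> N (mul (inv k) (mul n k))].

Definition setmul (X Y : set G) : set G :=
  [set z | exists2 x, X x & exists2 y, Y y & z = mul x y].
End Subgroups.

Definition closed_subgroup (G : topologicalType) (mul : G -> G -> G)
    (inv : G -> G) (one : G) (S : set G) :=
  is_subgroup mul inv one S /\ closed S.

Definition is_succ d (O : orderType d) (a b : O) :=
  (a < b)%O /\ forall c, (a < c)%O -> (b <= c)%O.

Definition is_limit d (O : orderType d) (a : O) :=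
  (exists b, (b < a)%O) /\ forall b, (b < a)%O -> exists c, (b < c)%O /\ (c < a)%O.

(* The indices of an accessible series over an ordinal mu are the ordinals
   alpha <= mu; we model them by a well-ordered type O (a total order which
   is well-founded) having a greatest element mu. *)
Definition ordinal_index d (O : orderType d) (mu : O) :=
  well_founded (fun x y : O => (x < y)%O) /\ forall a : O, (a <= mu)%O.

Definition accessible_series (G : topologicalType) (mul : G -> G -> G)
    (inv : G -> G) (one : G) d (O : orderType d) (Hs : O -> set G) :=
  [/\ forall a, closed_subgroup mul inv one (Hs a),
      forall a, (forall b, ~ (b < a)%O) -> Hs a = [set: G],
      forall a b, (a <= b)%O -> Hs b `<=` Hs a,
      forall a b, is_succ a b -> normal_sub mul inv one (Hs b) (Hs a) &
      forall a, is_limit a -> Hs a = \bigcap_(b in [set b | (b < a)%O]) Hs b].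

(* Main.v *)
Require Import Defs.
From HB Require Import structures.
From mathcomp Require Import all_boot all_order.
From mathcomp Require Import all_classical all_reals all_analysis.
Import Order.TTheory.
Local Open Scope classical_set_scope.

Theorem lemma1p9 (G : topologicalType) (mul : G -> G -> G) (inv : G -> G) (one : G)
  (d : Order.disp_t) (O : orderType d) (mu : O) (Hs : O -> set G) (A B : set G) :
  profinite_group mul inv one ->
  ordinal_index mu ->
  accessible_series mul inv one Hs ->
  closed_subgroup mul inv one A ->
  closed_subgroup mul inv one B ->
  B `<=` A -> B <> A ->
  setmul mul A (Hs mu) <> setmul mul B (Hs mu) ->
  exists a b : O, [/\ (a < mu)%O, is_succ a b &
    setmul mul (A `&` Hs a) (Hs b) <> setmul mul (B `&` Hs a) (Hs b)].
Proof.
move=> [[[mulA mul1x mulx1 mulVx mulxV] Hmulc Hinvc] Gcomp _ _] [wf Hmu]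
  [Hcl Hmin Hmono Hsucc Hlim] [[A1 AM AI] _] [[B1 BM BI] Bcl] BA _ HAB.
apply: contrapT => Hne.
have Heq : forall a b, (a < mu)%O -> is_succ a b ->
    setmul mul (A `&` Hs a) (Hs b) = setmul mul (B `&` Hs a) (Hs b).
  move=> a b amu sab; apply: contrapT => neq; apply: Hne; exists a, b; by split.
have canc : forall y x k, x = mul y k -> mul (inv y) x = k.
  by move=> y x k ->; rewrite mulA mulVx mul1x.
have split1 : forall y x, x = mul y (mul (inv y) x).
  by move=> y x; rewrite mulA mulxV mul1x.
have claim : forall al x, A x -> exists2 y, B y & Hs al (mul (inv y) x).
  move=> al; elim/(well_founded_induction wf): al => al IH x Ax.
  have [[b0 b0al]|nob] := pselect (exists b, (b < al)%O); last first.
    exists one => //; rewrite Hmin //; move=> bq bal; apply: nob; by exists bq.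
  have [[bp sba]|nosucc] := pselect (exists b, is_succ b al).
    have [y By Hy] := IH bp sba.1 x Ax.
    set h := mul (inv y) x in Hy.
    have Ah : A h by apply: AM => //; apply: AI; apply: BA.
    have : setmul mul (A `&` Hs bp) (Hs al) h.
      exists h; first by split.
      exists one; first by have [[]] := Hcl al.
      by rewrite mulx1.
    rewrite Heq //; last first.
      by apply: (lt_le_trans sba.1).
    move=> [y' [By' _] [h' Hh' hE]].
    exists (mul y y'); first by apply: BM.
    rewrite (canc _ _ h') //.
    by rewrite -mulA -hE /h -split1.
  have lim : is_limit al.
    split; first by exists b0.
    move=> b bal; apply: contrapT => nc; apply: nosucc; exists b; split => //.
    move=> c bc; rewrite leNgt; apply/negP => cal; apply: nc; exists c; by split.
  rewrite (Hlim _ lim).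
  pose f := fun be => [set y | B y /\ Hs be (mul (inv y) x)].
  pose D := [set b | (b < al)%O].
  have fmono : forall be ga, (be <= ga)%O -> f ga `<=` f be.
    by move=> be ga bg y [By Hy]; split => //; apply: (Hmono _ _ bg).
  have seqlem : forall s : seq O, {subset s <= D} ->
      exists2 m, D m & forall i, i \in s -> f m `<=` f i.
    elim => [|i s IHs] sub.
      by exists b0 => // i; rewrite in_nil.
    have [m Dm Hm] := IHs (fun j js => sub j ltac:(by rewrite in_cons js orbT)).
    have [mi|im] := leP m i.
      exists i; first by rewrite -in_setE; apply: sub; rewrite mem_head.
      move=> j; rewrite in_cons => /orP [/eqP -> //|js].
      exact: (subset_trans (fmono _ _ mi) (Hm j js)).
    exists m => // j; rewrite in_cons => /orP [/eqP -> |js].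
      exact: fmono (ltW im).
    exact: Hm.
  have fI : finI D f.
    move=> D' sub.
    have [m Dm Hm] := seqlem (finmap.enum_fset D') sub.
    have [y By Hy] := IH m Dm x Ax.
    by exists y => i iD; apply: (Hm i iD).
  have PF := finI_filter fI.
  have [p [_ clp]] := Gcomp _ PF filterT.
  have fcl : forall be, closed (f be).
    move=> be; apply: closedI; first exact: Bcl.
    apply: preimage_closed; last by have [] := Hcl be.
    move=> z _.
    apply: (@continuous2_cvg _ G G G _ _ inv (fun=> x) mul (inv z) x).
    - exact: (Hmulc (inv z, x)).
    - exact: Hinvc.
    - exact: cvg_cst.
  have pf : forall be, D be -> f be p.
    move=> be Dbe; apply: (fcl be) => U nU.
    apply: clp => //; exists (f be) => //; exact: finI_from1.
  exists p; first by have [] := pf b0 b0al.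
  by move=> be Dbe; have [] := pf be Dbe.
apply: HAB; apply/seteqP; split => z.
  move=> [x Ax [h Hh ->]].
  have [y By Hy] := claim mu x Ax.
  exists y => //; exists (mul (mul (inv y) x) h).
    have [[_ HM _] _] := Hcl mu; by apply: HM.
  rewrite mulA. rewrite -(split1 y x). by [].
move=> [x Bx [h Hh ->]]; exists x; first by apply: BA.
by exists h.
Qed.
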